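(* Let $p$ be a prime and let $a,b\in\mathbb{C}_p$ with $a\neq0$, $b\neq0$, $a\neq b$ and $|a|_p<|b|_p$. Let $P=-\frac1b$, $D=\mathbb{C}_p\setminus\{P\}$, $f(x)=\frac{ax^2}{bx+1}$ on $D$, $x_1=0$, $x_2=\frac{1}{a-b}$. For $n\geq0$ put $r_n=\frac{|b|_p^{n-1}}{|a|_p^{n}}$, and put $l_0=0$, $l_{n+1}=\frac{|a|_p^{n}}{|b|_p^{n+1}}$. Define $\Omega=\{x\in D:\ x^{(i)}=P\text{ for some } i\ge1\}$, $\Psi=\{x\in D\setminus\{x_2\}:\ x^{(j)}=x_2\text{ for some } j\ge1\}$, $\Sigma=\{x\in D\setminus\{x_1,x_2\}:\ x^{(k)}=x\text{ for some }k\ge 2\}$. Then $$\Omega\cup\Psi\cup\Sigma\subset\bigcup_{i=1}^{\infty}S_{r_i}(x_1)\cup\bigcup_{j=0}^{\infty}S_{l_j}(P).$$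
   Context: $\mathbb{C}_p$ is the field of complex $p$-adic numbers with $p$-adic norm $|\cdot|_p$. For $c\in\mathbb{C}_p$ and $r\ge0$, $S_r(c)=\{x\in\mathbb{C}_p:|x-c|_p=r\}$. For $x\in D$, $x^{(n)}=f^n(x)$ denotes the $n$-th iterate of $f$ at $x$ (defined as long as no earlier iterate equals $P$). *)

(* Defs.v *)
From HB Require Import structures.
From mathcomp Require Import all_boot all_order all_algebra.
From mathcomp Require Import reals.
Set Implicit Arguments. Unset Strict Implicit. Unset Printing Implicit Defensive.
Import Order.TTheory GRing.Theory Num.Theory.
Local Open Scope ring_scope.

Definition is_nonarch_abs (K : fieldType) (R : realFieldType) (v : K -> R) :=
  [/\ forall x, 0 <= v x,
      forall x, v x = 0 <-> x = 0,
      forall x y, v (x * y) = v x * v y &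
      forall x y, v (x + y) <= Num.max (v x) (v y)].

Definition v_complete (K : fieldType) (R : realFieldType) (v : K -> R) :=
  forall u : nat -> K,
    (forall e : R, 0 < e -> exists N : nat, forall m n : nat,
        (N <= m)%N -> (N <= n)%N -> v (u m - u n) < e) ->
    exists l : K, forall e : R, 0 < e -> exists N : nat, forall n : nat,
        (N <= n)%N -> v (u n - l) < e.

Definition Cp_like (p : nat) (K : closedFieldType) (R : realType) (v : K -> R) :=
  [/\ prime p, is_nonarch_abs v, v (p%:R) = (p%:R)^-1 & v_complete v].

Definition sphere (K : fieldType) (R : realFieldType) (v : K -> R) (c : K) (r : R) :=
  fun x : K => v (x - c) = r.

Section Dyn.
Variables (K : fieldType) (a b : K).

Definition pole : K := - b^-1.
Definition fmap (x : K) : K := a * x ^+ 2 / (b * x + 1).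
Definition x1 : K := 0.
Definition x2 : K := (a - b)^-1.

(* x^(n) = iter n fmap x; it is defined iff x^(k) <> P for all k < n *)
Definition orbit_defined (x : K) (n : nat) : Prop :=
  forall k : nat, (k < n)%N -> iter k fmap x <> pole.

Definition Omega (x : K) : Prop :=
  x <> pole /\ exists i : nat, (1 <= i)%N /\ orbit_defined x i /\ iter i fmap x = pole.

Definition Psi (x : K) : Prop :=
  x <> pole /\ x <> x2 /\
  exists j : nat, (1 <= j)%N /\ orbit_defined x j /\ iter j fmap x = x2.

Definition Sigma (x : K) : Prop :=
  x <> pole /\ x <> x1 /\ x <> x2 /\
  exists k : nat, (2 <= k)%N /\ orbit_defined x k /\ iter k fmap x = x.
End Dyn.

Definition radius_r (K : fieldType) (R : realFieldType) (v : K -> R) (a b : K) (n : nat) : R :=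
  v b ^+ n.-1 / v a ^+ n.          (* used only for n >= 1 *)

Definition radius_l (K : fieldType) (R : realFieldType) (v : K -> R) (a b : K) (n : nat) : R :=
  match n with
  | 0 => 0
  | m.+1 => v a ^+ m / v b ^+ m.+1
  end.

(* Main.v *)
Require Import Defs.
From HB Require Import structures.
From mathcomp Require Import all_boot all_order all_algebra.
From mathcomp Require Import reals.
From mathcomp Require Import ring lra.
From Stdlib Require Import Classical.
Import Order.TTheory GRing.Theory Num.Theory.
Local Open Scope ring_scope.

Lemma nv0 {K : fieldType} {R : realFieldType} (v : K -> R) :
  is_nonarch_abs v -> v 0 = 0.
Proof. by case=> _ h _ _; apply/h. Qed.

Lemma nv1 {K : fieldType} {R : realFieldType} (v : K -> R) :
  is_nonarch_abs v -> v 1 = 1.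
Proof.
move=> hv; case: (hv) => h0 h _ _.
have hM := (let: And4 _ _ m _ := hv in m).
have : v 1 * v 1 = v 1 by rewrite -hM mulr1.
have : v 1 != 0 by apply/eqP => /h /eqP; rewrite oner_eq0.
move=> nz e.
by apply: (mulfI nz); rewrite e mulr1.
Qed.

Lemma nvN {K : fieldType} {R : realFieldType} (v : K -> R) x :
  is_nonarch_abs v -> v (- x) = v x.
Proof.
move=> hv; have [h0 h hM _] := hv.
have e1 : v (-1) = 1.
  have : v (-1) * v (-1) = 1 by rewrite -hM mulrNN mulr1 (nv1 _ hv).
  move=> e. have ge := h0 (-1).
  have : (v (-1) - 1) * (v (-1) + 1) = 0 by rewrite mulrBl !mulrDr e; ring.
  move/eqP; rewrite mulf_eq0 => /orP[]; first by rewrite subr_eq0 => /eqP.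
  move=> /eqP e2; lra.
by rewrite -mulN1r hM e1 mul1r.
Qed.

Lemma nvV {K : fieldType} {R : realFieldType} (v : K -> R) x :
  is_nonarch_abs v -> v (x^-1) = (v x)^-1.
Proof.
move=> hv; have [h0 h hM _] := hv.
have [->|nz] := eqVneq x 0; first by rewrite invr0 (nv0 _ hv) invr0.
have nzv : v x != 0 by apply/eqP => /h /eqP; rewrite (negbTE nz).
have : v x * v (x^-1) = 1 by rewrite -hM mulfV // (nv1 _ hv).
move=> e; apply: (mulfI nzv); by rewrite e mulfV.
Qed.

Lemma nvD_lt {K : fieldType} {R : realFieldType} (v : K -> R) x y :
  is_nonarch_abs v -> v y < v x -> v (x + y) = v x.
Proof.
move=> hv lt; have [h0 h hM hD] := hv.
have le1 := hD x y.
have le2 := hD (x + y) (- y).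
rewrite addrK (nvN _ _ hv) in le2.
apply/eqP; rewrite eq_le; apply/andP; split.
  by apply: le_trans le1 _; rewrite ge_max lexx ltW.
move: le2; rewrite le_max => /orP[] // H; lra.
Qed.

Lemma nvM {K : fieldType} {R : realFieldType} (v : K -> R) x y :
  is_nonarch_abs v -> v (x * y) = v x * v y.
Proof. by case. Qed.

Lemma nvge0 {K : fieldType} {R : realFieldType} (v : K -> R) x :
  is_nonarch_abs v -> 0 <= v x.
Proof. by case. Qed.

Lemma nvgt0 {K : fieldType} {R : realFieldType} (v : K -> R) x :
  is_nonarch_abs v -> x != 0 -> 0 < v x.
Proof.
move=> hv nz; have [h0 h _ _] := hv; rewrite lt_def h0 andbT.
by apply/eqP => /h /eqP; rewrite (negbTE nz).
Qed.

Lemma nvpole {K : fieldType} {R : realFieldType} (v : K -> R) b :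
  is_nonarch_abs v -> v (pole b) = (v b)^-1.
Proof. by move=> hv; rewrite /pole (nvN _ _ hv) (nvV _ _ hv). Qed.

Lemma nvf {K : fieldType} {R : realFieldType} (v : K -> R) a b x :
  is_nonarch_abs v -> b != 0 ->
  v (fmap a b x) = v a * v x ^+ 2 / (v b * v (x - pole b)).
Proof.
move=> hv hb; rewrite /fmap.
have -> : b * x + 1 = b * (x - pole b) by rewrite /pole opprK mulrDr mulfV.
by rewrite !(nvM _ _ _ hv) (nvV _ _ hv) (nvM _ _ _ hv) expr2.
Qed.

Lemma nvxP_small {K : fieldType} {R : realFieldType} (v : K -> R) b x :
  is_nonarch_abs v -> v x < (v b)^-1 -> v (x - pole b) = (v b)^-1.
Proof.
move=> hv lt; rewrite addrC nvD_lt //; first by rewrite (nvN _ _ hv) (nvpole _ _ hv).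
by rewrite (nvN _ _ hv) (nvpole _ _ hv).
Qed.

Lemma nvxP_big {K : fieldType} {R : realFieldType} (v : K -> R) b x :
  is_nonarch_abs v -> (v b)^-1 < v x -> v (x - pole b) = v x.
Proof.
by move=> hv lt; rewrite nvD_lt // (nvN _ _ hv) (nvpole _ _ hv).
Qed.

Lemma absorb {K : fieldType} {R : realFieldType} (v : K -> R) a b x :
  is_nonarch_abs v -> b != 0 -> v a < v b ->
  v x < (v b)^-1 -> v (fmap a b x) < (v b)^-1.
Proof.
move=> hv hb hab lt; rewrite (nvf _ _ _ _ hv hb) (nvxP_small _ _ _ hv lt).
have bp := nvgt0 _ _ hv hb.
rewrite mulfV ?gt_eqF // divr1.
set c := (v b)^-1 in lt *.
have hc : v b * c = 1 by rewrite /c mulfV ?gt_eqF.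
have cp : 0 < c by rewrite /c invr_gt0.
have := nvge0 _ a hv; have := nvge0 _ x hv => h1 h2.
rewrite expr2.
have : v x * v x <= c * c by apply: ler_pM => //; exact: ltW.
move=> h3.
have : v a * (v x * v x) <= v a * (c * c) by apply: ler_wpM2l.
have : v a * (c * c) < v b * (c * c) by rewrite ltr_pM2r ?mulr_gt0.
nra.
Qed.

Lemma absorb_iter {K : fieldType} {R : realFieldType} (v : K -> R) a b x :
  is_nonarch_abs v -> b != 0 -> v a < v b ->
  v x < (v b)^-1 -> forall n, v (iter n (fmap a b) x) < (v b)^-1.
Proof.
move=> hv hb hab lt; elim=> [//|n IH]; rewrite iterS; exact: absorb.
Qed.

Lemma big_step {K : fieldType} {R : realFieldType} (v : K -> R) a b x :
  is_nonarch_abs v -> b != 0 ->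
  (v b)^-1 < v x -> v (fmap a b x) = v a / v b * v x.
Proof.
move=> hv hb lt; rewrite (nvf _ _ _ _ hv hb) (nvxP_big _ _ _ hv lt).
have bp := nvgt0 _ _ hv hb.
have xp : 0 < v x by apply: lt_trans lt; rewrite invr_gt0.
field; rewrite ?gt_eqF //.
Qed.

Lemma alg1 {R : realFieldType} (al be y : R) :
  0 < al -> 0 < be -> al / be * y = be^-1 -> y = be ^+ 0 / al ^+ 1.
Proof.
move=> ha hb e; rewrite expr0 expr1.
have : y = be / al * (al / be * y) by field; rewrite ?gt_eqF.
by rewrite e => ->; field; rewrite ?gt_eqF.
Qed.

Lemma alg2 {R : realFieldType} (al be y : R) k :
  0 < al -> 0 < be -> al / be * y = be ^+ k / al ^+ k.+1 ->
  y = be ^+ k.+1 / al ^+ k.+2.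
Proof.
move=> ha hb e.
have : y = be / al * (al / be * y) by field; rewrite ?gt_eqF.
rewrite e => ->; rewrite (exprS be k) (exprS al k.+1).
field; rewrite ?mulf_neq0 ?expf_neq0 ?gt_eqF //.
Qed.

Lemma escape {K : fieldType} {R : realFieldType} (v : K -> R) a b :
  is_nonarch_abs v -> a != 0 -> b != 0 -> v a < v b ->
  forall n y, (v b)^-1 < v y ->
  (forall k, (1 <= k)%N -> v y <> radius_r v a b k) ->
  v (iter n (fmap a b) (fmap a b y)) < v y /\
  v (iter n (fmap a b) (fmap a b y)) <> (v b)^-1.
Proof.
move=> hv ha hb hab; have ap := nvgt0 _ _ hv ha; have bp := nvgt0 _ _ hv hb.
elim=> [|n IH] y hy hr.
- have yp : 0 < v y by apply: lt_trans hy; rewrite invr_gt0.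
  rewrite /= (big_step _ _ _ _ hv hb hy); split.
    rewrite -[ltRHS]mul1r ltr_pM2r // ltr_pdivrMr // mul1r //.
  move=> e; apply: (hr 1%N) => //; rewrite /radius_r /=; exact: alg1 e.
have yp : 0 < v y by apply: lt_trans hy; rewrite invr_gt0.
have hz := big_step _ _ _ _ hv hb hy.
have zlt : v (fmap a b y) < v y.
  by rewrite hz -[ltRHS]mul1r ltr_pM2r // ltr_pdivrMr // mul1r.
case: (ltgtP (v (fmap a b y)) (v b)^-1) => c.
- have := absorb_iter _ _ _ _ hv hb hab c n.+1 => h.
  split; first exact: lt_trans h hy.
  by move=> e; rewrite e ltxx in h.
- rewrite iterSr.
  have hr' : forall k, (1 <= k)%N -> v (fmap a b y) <> radius_r v a b k.
    move=> k k1 e; apply: (hr k.+1) => //.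
    case: k k1 e => [//|k] _ e.
    rewrite hz /radius_r /= in e; rewrite /radius_r /=; exact: alg2 e.
  have [h1 h2] := IH (fmap a b y) c hr'.
  split => //; exact: lt_trans h1 zlt.
- exfalso; apply: (hr 1%N) => //; rewrite /radius_r /=; apply: alg1 => //.
  by rewrite -hz.
Qed.

Lemma alg3 {R : realFieldType} (al be d : R) k :
  0 < al -> 0 < be -> 0 < d ->
  al * (be^-1) ^+ 2 / (be * d) = be ^+ k / al ^+ k.+1 ->
  d = al ^+ k.+2 / be ^+ k.+3.
Proof.
move=> ha hb hd e.
have : d = al * (be^-1) ^+ 2 / be / (al * (be^-1) ^+ 2 / (be * d)).
  by field; rewrite ?mulf_neq0 ?expf_neq0 ?invr_neq0 ?gt_eqF.
rewrite e => ->; rewrite !exprS.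
field; rewrite ?mulf_neq0 ?expf_neq0 ?gt_eqF //.
Qed.

Lemma alg4 {R : realFieldType} (al be d : R) :
  0 < al -> 0 < be -> 0 < d ->
  al * (be^-1) ^+ 2 / (be * d) = be^-1 ->
  d = al ^+ 1 / be ^+ 2.
Proof.
move=> ha hb hd e.
have : d = al * (be^-1) ^+ 2 / be / (al * (be^-1) ^+ 2 / (be * d)).
  by field; rewrite ?mulf_neq0 ?expf_neq0 ?invr_neq0 ?gt_eqF.
rewrite e => ->.
field; rewrite ?mulf_neq0 ?expf_neq0 ?gt_eqF //.
Qed.

Theorem corollary3p4 (p : nat) (R : realType) (K : closedFieldType) (v : K -> R)
  (hK : Cp_like p v) (a b : K) (ha : a != 0) (hb : b != 0) (hab : a != b)
  (hv : v a < v b) (x : K) :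
  Omega a b x \/ Psi a b x \/ Sigma a b x ->
  (exists i : nat, (1 <= i)%N /\ sphere v (x1 K) (radius_r v a b i) x) \/
  (exists j : nat, sphere v (pole b) (radius_l v a b j) x).
Proof.
have hn : is_nonarch_abs v by case: hK.
have ap := nvgt0 _ _ hn ha; have bp := nvgt0 _ _ hn hb.
have cp : 0 < (v b)^-1 by rewrite invr_gt0.
have vx2 : v (x2 a b) = (v b)^-1.
  rewrite /x2 (nvV _ _ hn) addrC nvD_lt ?(nvN _ _ hn) //.
move=> H.
have [xP [m [m1 hit]]] : x <> pole b /\ exists m, (1 <= m)%N /\
    (v (iter m (fmap a b) x) = (v b)^-1 \/ iter m (fmap a b) x = x).
  case: H => [[xP [i [i1 [_ e]]]]|[[xP [_ [j [j1 [_ e]]]]]|[xP [_ [_ [k [k2 [_ e]]]]]]]].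
  - by split=> //; exists i; split=> //; left; rewrite e (nvpole _ _ hn).
  - by split=> //; exists j; split=> //; left; rewrite e vx2.
  - by split=> //; exists k; split; [exact: ltnW | right].
case: m m1 hit => [//|m] _; rewrite iterSr => hit.
case: (ltgtP (v x) (v b)^-1) => cx.
- right; exists 1%N; rewrite /sphere /radius_l expr0 expr1 mul1r.
  exact: nvxP_small.
- case: (classic (exists i, (1 <= i)%N /\ v x = radius_r v a b i)) => [[i [i1 e]]|nE].
    by left; exists i; split=> //; rewrite /sphere /x1 subr0.
  have hr : forall k, (1 <= k)%N -> v x <> radius_r v a b k.
    by move=> k k1 e; apply: nE; exists k.
  have [h1 h2] := escape _ _ _ hn ha hb hv m _ cx hr.
  case: hit => // e; by rewrite e ltxx in h1.
- set d := v (x - pole b).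
  have dp : 0 < d by apply: nvgt0 => //; rewrite subr_eq0; apply/eqP.
  have dle : d <= (v b)^-1.
    have [_ _ _ hD] := hn.
    apply: le_trans (hD _ _) _; rewrite (nvN _ _ hn) (nvpole _ _ hn) cx.
    by rewrite maxxx.
  have hf : v (fmap a b x) = v a * ((v b)^-1) ^+ 2 / (v b * d).
    by rewrite (nvf _ _ _ _ hn hb) cx.
  case: (ltgtP (v (fmap a b x)) (v b)^-1) => cf.
  + have := absorb_iter _ _ _ _ hn hb hv cf m => h.
    case: hit => e; first by rewrite e ltxx in h.
    by rewrite e cx ltxx in h.
  + case: (classic (exists k, (1 <= k)%N /\ v (fmap a b x) = radius_r v a b k)) => [[k [k1 e]]|nE].
      right; exists k.+2; rewrite /sphere /radius_l -/d.
      case: k k1 e => [//|k] _; rewrite /radius_r /= hf => e.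
      exact: alg3 e.
    have hr : forall k, (1 <= k)%N -> v (fmap a b x) <> radius_r v a b k.
      by move=> k k1 e; apply: nE; exists k.
    case: m hit => [|m] hit.
      by case: hit => /= e; [rewrite e ltxx in cf | rewrite e cx ltxx in cf].
    rewrite iterSr in hit.
    have [h1 h2] := escape _ _ _ hn ha hb hv m _ cf hr.
    by exfalso; case: hit => e; apply: h2; rewrite ?e ?cx.
  + right; exists 2%N; rewrite /sphere /radius_l -/d.
    apply: alg4 => //; by rewrite -hf.
Qed.
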